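(* Let $n\ge1$, $m=2^n$, $A\subseteq\{0,1\}^n$, $a=|A|$. The rank of irreducibility of the orthogonal system $S_A$ equals $IR(S_A)=m-a$. Consequently, the average rank of irreducibility over all $2^m$ orthogonal systems $S_A$, $A\subseteq\{0,1\}^n$, equals $$2^{-m}\sum_{a=0}^{m}(m-a)\binom{m}{a}=\frac{m}{2}.$$
   Context: Boolean algebras are in the language $\{\vee,\cdot,\bar{\ },0,1\}$; the boolean algebra of rank $r\ge1$ is the power set algebra of an $r$-element set. Orthogonal variables: $Z=\{z_\alpha:\alpha\in\{0,1\}^n\}$, $|Z|=m=2^n$. For $A\subseteq\{0,1\}^n$ the orthogonal system is $$S_A=\{z_\alpha=0\mid\alpha\in A\}\cup\{z_\alpha z_\beta=0\mid \alpha\ne\beta\}\cup\{\textstyle\bigvee_{\alpha}z_\alpha=1\}.$$ A nonempty algebraic set (solution set of a system) is irreducible if it is not a finite union of proper algebraic subsets. The rank of irreducibility $IR(S)$ of a system $S$ is the number $k\ge1$ such that the solution set of $S$ is irreducible over the boolean algebra of rank $k$ but reducible over the boolean algebra of every rank $r<k$; if $S$ is inconsistent over every nontrivial boolean algebra, $IR(S)=0$. *)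

(* Defs.v *)
From mathcomp Require Import all_boot.
Set Implicit Arguments. Unset Strict Implicit. Unset Printing Implicit Defensive.

Inductive bterm (V : Type) : Type :=
  | BVar of V
  | BJoin of bterm V & bterm V
  | BMeet of bterm V & bterm V
  | BCompl of bterm V
  | BZero
  | BOne.
Arguments BZero {V}. Arguments BOne {V}.

(* The boolean algebra of rank r: the power set of the r-element set 'I_r.
   A point of the affine space B_r^V is an assignment V -> {set 'I_r}. *)
Definition point (r : nat) (V : Type) := V -> {set 'I_r}.

Fixpoint beval (r : nat) (V : Type) (x : point r V) (t : bterm V) : {set 'I_r} :=
  match t with
  | BVar v => x v
  | BJoin t1 t2 => beval x t1 :|: beval x t2
  | BMeet t1 t2 => beval x t1 :&: beval x t2
  | BCompl t1 => ~: beval x t1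
  | BZero => set0
  | BOne => setT
  end.

Definition system (V : Type) := bterm V * bterm V -> Prop.

Definition sol (r : nat) (V : Type) (S : system V) : point r V -> Prop :=
  fun x => forall e, S e -> beval x e.1 = beval x e.2.
Arguments sol r {V} S.

Definition algebraic (r : nat) (V : Type) (Y : point r V -> Prop) : Prop :=
  exists S : system V, forall x, Y x <-> sol r S x.

Definition irreducible (r : nat) (V : Type) (Y : point r V -> Prop) : Prop :=
  (exists x, Y x) /\
  ~ (exists (k : nat) (Ys : nat -> point r V -> Prop),
        (forall i, i < k ->
           [/\ algebraic (Ys i), (forall x, Ys i x -> Y x) & exists x, Y x /\ ~ Ys i x])
        /\ (forall x, Y x <-> exists2 i, i < k & Ys i x)).

Definition reducible (r : nat) (V : Type) (Y : point r V -> Prop) : Prop :=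
  (exists x, Y x) /\ ~ irreducible Y.

Definition IR_is (V : Type) (S : system V) (k : nat) : Prop :=
  match k with
  | 0 => forall r, 1 <= r -> forall x : point r V, ~ sol r S x
  | k'.+1 => irreducible (sol k S) /\
             forall r, 1 <= r -> r < k -> reducible (sol r S)
  end.

Definition bits (n : nat) := {ffun 'I_n -> bool}.

Definition bigJoin (V : Type) (l : seq V) : bterm V :=
  foldr (fun v t => BJoin (BVar v) t) BZero l.

Definition S_orth (n : nat) (A : {set bits n}) : system (bits n) :=
  fun e =>
    (exists2 al, al \in A & e = (BVar al, BZero)) \/
    (exists al be, al != be /\ e = (BMeet (BVar al) (BVar be), BZero)) \/
    e = (bigJoin (enum [set: bits n]), BOne).

(* Main.v *)
Require Import Defs.
From mathcomp Require Import all_boot.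
From mathcomp Require Import zify.
Set Implicit Arguments. Unset Strict Implicit. Unset Printing Implicit Defensive.

Fixpoint bevalb (V : Type) (f : V -> bool) (t : bterm V) : bool :=
  match t with
  | BVar v => f v
  | BJoin a b => bevalb f a || bevalb f b
  | BMeet a b => bevalb f a && bevalb f b
  | BCompl a => ~~ bevalb f a
  | BZero => false
  | BOne => true
  end.

Lemma in_beval r V (x : point r V) t i :
  (i \in beval x t) = bevalb (fun v => i \in x v) t.
Proof.
elim: t => /= [v|a IHa b IHb|a IHa b IHb|a IHa||]; by rewrite ?inE ?IHa ?IHb.
Qed.

Lemma bevalb_ext V (f g : V -> bool) t : f =1 g -> bevalb f t = bevalb g t.
Proof. move=> H; elim: t => /= [v|a -> b ->|a -> b ->|a ->||] //. Qed.

Lemma transfer r r' V (x : point r V) (y : point r' V) :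
  (forall i' : 'I_r', exists i : 'I_r, forall v, (i' \in y v) = (i \in x v)) ->
  forall t s, beval x t = beval x s -> beval y t = beval y s.
Proof.
move=> cov t s E; apply/setP => i'; have [i Hi] := cov i'.
rewrite !in_beval (@bevalb_ext _ _ _ t Hi) (@bevalb_ext _ _ _ s Hi) -!in_beval E.
by [].
Qed.

Lemma beval_bigJoin r V (x : point r V) l i :
  (i \in beval x (bigJoin l)) = has (fun v => i \in x v) l.
Proof. elim: l => [|v l IH] /=; by rewrite ?inE ?IH. Qed.

Section Orth.
Variable n : nat.
Variable A : {set bits n}.

Lemma solP r (x : point r (bits n)) : sol r (S_orth A) x <->
  [/\ forall al, al \in A -> x al = set0,
      forall al be, al != be -> x al :&: x be = set0
    & forall i, exists v, i \in x v].
Proof.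
split.
- move=> H; split.
  + move=> al alA; exact: (H (BVar al, BZero) (or_introl (ex_intro2 _ _ al alA erefl))).
  + move=> al be ne.
    exact: (H _ (or_intror (or_introl (ex_intro _ al (ex_intro _ be (conj ne erefl)))))).
  + move=> i; have E := H _ (or_intror (or_intror erefl)).
    have : i \in [set: 'I_r] by rewrite inE.
    rewrite /= in E; rewrite -E beval_bigJoin => /hasP [v _ iv]; by exists v.
- move=> [h1 h2 h3] e [[al alA ->]|[[al [be [ne ->]]]|->]] /=.
  + exact: h1.
  + exact: h2.
  + apply/setP => i; rewrite beval_bigJoin inE; have [v iv] := h3 i.
    by apply/hasP; exists v; rewrite ?mem_enum ?inE.
Qed.

Lemma label r (y : point r (bits n)) : sol r (S_orth A) y ->
  forall i, exists v0, v0 \in ~: A /\ forall v, (i \in y v) = (v == v0).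
Proof.
move/solP => [h1 h2 h3] i; have [v0 iv0] := h3 i.
exists v0; split.
  rewrite inE; apply/negP => vA; move: iv0; by rewrite h1 // inE.
move=> v; case: eqP => [->//|/eqP ne]; apply/negP => iv.
have /setP/(_ i) := h2 v v0 ne; by rewrite in_setI iv iv0 in_set0.
Qed.

Definition cst r (w : bits n) : point r (bits n) :=
  fun v => if v == w then setT else set0.

Lemma cst_sol r w : w \in ~: A -> sol r (S_orth A) (cst r w).
Proof.
move=> wA; apply/solP; split.
- move=> al alA; rewrite /cst; case: eqP => // E; subst.
  by rewrite inE alA in wA.
- move=> al be ne; rewrite /cst; case: (al =P w) => [E1|_]; last by rewrite set0I.
  case: (be =P w) => [E2|_]; last by rewrite setI0.
  by rewrite E1 E2 eqxx in ne.
- move=> i; exists w; by rewrite /cst eqxx inE.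
Qed.

Definition xc : point #|~: A| (bits n) :=
  fun v => [set i | enum_val i == v].

Lemma xc_sol : sol _ (S_orth A) xc.
Proof.
apply/solP; split.
- move=> al alA; apply/setP => i; rewrite !inE; apply/negP => /eqP E.
  have := enum_valP i; by rewrite E inE alA.
- move=> al be ne; apply/setP => i; rewrite !inE.
  apply/negP => /andP [/eqP E1 /eqP E2]; by rewrite -E1 -E2 eqxx in ne.
- move=> i; exists (enum_val i); by rewrite inE.
Qed.

Lemma irr_c r : #|~: A| = r -> irreducible (sol r (S_orth A)).
Proof.
move=> E; case: r / E.
split; first by exists xc; exact: xc_sol.
case=> k [Ys [HY Hu]].
have [j jk Yj] := (Hu xc).1 xc_sol.
have [[S' HS'] sub [y [Yy nYj]]] := HY j jk.
apply: nYj; apply/HS' => e Se.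
have := (HS' xc).1 Yj e Se; apply: transfer => i'.
have [v0 [v0A Hv0]] := label Yy i'.
exists (enum_rank_in v0A v0) => v.
by rewrite Hv0 inE (enum_rankK_in v0A v0A) eq_sym.
Qed.

Lemma red_lt r : 1 <= r -> r < #|~: A| -> reducible (sol r (S_orth A)).
Proof.
move=> hr hrc.
have [w wA] : exists w, w \in ~: A by apply/card_gt0P; lia.
have i0 : 'I_r := Ordinal hr.
split; first by exists (cst r w); exact: cst_sol.
move=> [_ Hirr]; apply: Hirr.
exists #|~: A|, (fun j x => sol r (S_orth A) x /\ x (nth w (enum (~: A)) j) = set0).
split.
- move=> j jk; split.
  + exists (fun e => S_orth A e \/ e = (BVar (nth w (enum (~: A)) j), BZero)).
    move=> x; split.
    * move=> [Hs H0] e [Se|->]; [exact: Hs | exact: H0].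
    * move=> Hs; split; [move=> e Se; apply: Hs; by left | exact: (Hs _ (or_intror erefl))].
  + by move=> x [].
  + have wj : nth w (enum (~: A)) j \in ~: A.
      by rewrite -mem_enum mem_nth // -cardE.
    exists (cst r (nth w (enum (~: A)) j)); split; first exact: cst_sol.
    case=> _; rewrite /cst eqxx => /setP/(_ i0); by rewrite !inE.
- move=> x; split; last by case=> j _ [].
  move=> Hx.
  have [v /andP [vA /eqP e0]] : exists v, (v \in ~: A) && (x v == set0).
    case: (boolP [exists v, (v \in ~: A) && (x v == set0)]) => [/existsP //|N].
    exfalso.
    have H u : ~~ ((u \in ~: A) && (x u == set0)).
      by apply/negP => Hu; case/negP: N; apply/existsP; exists u.
    have [h1 h2 h3] := (solP x).1 Hx.
    pose h v := odflt i0 [pick i in x v].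
    have hin u : u \in ~: A -> h u \in x u.
      move=> uA; rewrite /h; case: pickP => [i //|/= Np].
      have := H u; rewrite uA /=; case/negP; apply/eqP/setP => i.
      by rewrite inE Np.
    have inj : {in ~: A &, injective h}.
      move=> u v uA vA E; apply/eqP; apply/negPn/negP => ne.
      have /setP/(_ (h u)) := h2 u v ne.
      by rewrite in_setI (hin u uA) E (hin v vA) in_set0.
    have := max_card (mem [set h x | x in ~: A]).
    rewrite (card_in_imset inj) card_ord; lia.
  exists (index v (enum (~: A))).
    by rewrite cardE index_mem mem_enum.
  by split => //; rewrite nth_index // mem_enum.
Qed.

Lemma nosol r : #|~: A| = 0 -> 1 <= r -> forall x : point r (bits n), ~ sol r (S_orth A) x.
Proof.
move=> c0 hr x Hx; have [v0 [v0A _]] := label Hx (Ordinal hr).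
by rewrite (card0_eq c0) in v0A.
Qed.

Lemma IR_exact : IR_is (S_orth A) #|~: A|.
Proof.
rewrite /IR_is; case E: #|~: A| => [|c].
  by move=> r hr x; apply: nosol.
split; first exact: irr_c.
move=> r hr hrc; apply: red_lt => //; by rewrite E.
Qed.

Lemma IR_uniq k : IR_is (S_orth A) k -> k = #|~: A|.
Proof.
case: k => [|k] /=.
  move=> H; case E: #|~: A| => [//|c].
  have [w wA] : exists w, w \in ~: A by apply/card_gt0P; rewrite E.
  by case: (H 1 isT (cst 1 w)); exact: cst_sol.
move=> [Hi Hr].
have c0 : 0 < #|~: A|.
  case: Hi => [[x Hx] _]; rewrite lt0n; apply/negP => /eqP c0.
  exact: (nosol c0 (ltn0Sn k) Hx).
have [lt|gt|Eq] := ltngtP k.+1 #|~: A|.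
- by case: (red_lt (ltn0Sn k) lt) => _ /(_ Hi).
- by case: (Hr _ c0 gt) => _ /(_ (irr_c (erefl _))).
- exact: Eq.
Qed.

End Orth.

Lemma card_bits n : #|bits n| = 2 ^ n.
Proof. by rewrite /bits card_ffun card_bool card_ord. Qed.

Lemma cardC_bits n (A : {set bits n}) : #|~: A| = 2 ^ n - #|A|.
Proof. by rewrite -(card_bits n) -(cardsC A) addKn. Qed.

Lemma card_setT (T : finType) : #|{set T}| = 2 ^ #|T|.
Proof.
have E : powerset [set: T] = [set: {set T}].
  by apply/setP => B; rewrite powersetE subsetT inE.
by rewrite -[LHS]cardsT -E card_powerset cardsT.
Qed.

Theorem mainTheorem5 (n : nat) (hn : 1 <= n) :
  (forall A : {set bits n}, IR_is (S_orth A) (2 ^ n - #|A|)) /\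
  (forall f : {set bits n} -> nat,
     (forall A, IR_is (S_orth A) (f A)) ->
     (\sum_(A : {set bits n}) f A) * 2 = 2 ^ n * 2 ^ (2 ^ n)) /\
  (\sum_(a < (2 ^ n).+1) (2 ^ n - a) * 'C(2 ^ n, a)) * 2 = 2 ^ n * 2 ^ (2 ^ n).
Proof.
split; first by move=> A; rewrite -cardC_bits; exact: IR_exact.
split.
- move=> f Hf.
  rewrite (eq_bigr (fun A => #|~: A|)); last by move=> A _; exact: IR_uniq.
  have E : \sum_(A : {set bits n}) #|~: A| = \sum_(A : {set bits n}) #|A|.
    rewrite (reindex_inj (@setC_inj _)) /=.
    by apply: eq_bigr => A _; rewrite setCK.
  rewrite muln2 -addnn {1}E -big_split /=.
  rewrite (eq_bigr (fun _ => 2 ^ n)); last by move=> A _; rewrite cardsC card_bits.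
  by rewrite sum_nat_const cardT -cardE card_setT card_bits mulnC.
- set m := 2 ^ n.
  have E : \sum_(a < m.+1) (m - a) * 'C(m, a) = \sum_(a < m.+1) a * 'C(m, a).
    rewrite (reindex_inj rev_ord_inj) /=.
    apply: eq_bigr => a _; rewrite subKn ?bin_sub //; by rewrite -ltnS.
  rewrite muln2 -addnn {1}E -big_split /=.
  rewrite (eq_bigr (fun a : 'I_m.+1 => m * 'C(m, a))); last first.
    move=> a _; rewrite -mulnDl subnKC //; by rewrite -ltnS.
  rewrite -big_distrr /=; congr (_ * _).
  have := expnDn 1 1 m; rewrite add1n => ->.
  by apply: eq_bigr => a _; rewrite !exp1n !muln1.
Qed.
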